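(* Let $n\ge1$, $X=\{0,1,\dots,n-1\}$, $f:X\to X$ any function, and $s\in X$. Let $(x_0,x_1,\dots)$ be the state sequence of the counter-assisted generator: $x_0=s$ and $x_i=f(x_{i-1})+i \pmod n$ for $i\ge1$. Then for all indices $i,j\ge0$ with $i\not\equiv j\pmod n$: if $x_i=x_j$ then $x_{i+1}\neq x_{j+1}$, and, if moreover $i,j\ge1$, also $x_{i-1}\neq x_{j-1}$.
   Context: Addition in $X$ is carried out modulo $n$. *)

(* Defs.v *)
From mathcomp Require Import all_boot.
Set Implicit Arguments. Unset Strict Implicit. Unset Printing Implicit Defensive.

Fixpoint cag_state (n : nat) (Hn : 0 < n) (f : 'I_n -> 'I_n) (s : 'I_n) (i : nat)
  : 'I_n :=
  match i with
  | 0 => s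
  | i'.+1 => Ordinal (ltn_pmod (nat_of_ord (f (cag_state Hn f s i')) + i'.+1) Hn)
  end.

(* Main.v *)
Require Import Defs.
From mathcomp Require Import all_boot.

Lemma cag_S (n : nat) (Hn : 0 < n) (f : 'I_n -> 'I_n) (s : 'I_n) k :
  nat_of_ord (cag_state Hn f s k.+1) = (f (cag_state Hn f s k) + k.+1) %% n.
Proof. by []. Qed.

Theorem mainTheorem2 (n : nat) (Hn : 0 < n) (f : 'I_n -> 'I_n) (s : 'I_n)
  (i j : nat) :
  i != j %[mod n] ->
  cag_state Hn f s i = cag_state Hn f s j ->
  cag_state Hn f s i.+1 <> cag_state Hn f s j.+1 /\
  (0 < i -> 0 < j -> cag_state Hn f s i.-1 <> cag_state Hn f s j.-1).
Proof.
move=> Hij Heq; split.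
  move=> /(congr1 (@nat_of_ord n)) /eqP; rewrite !cag_S Heq eqn_modDl -addn1 -[j.+1]addn1 eqn_modDr.
  by rewrite (negbTE Hij).
case: i Hij Heq => [|i] // ; case: j => [|j] // Hij Heq _ _ /= E.
move/(congr1 (@nat_of_ord n))/eqP: Heq; rewrite !cag_S E eqn_modDl.
by rewrite (negbTE Hij).
Qed.
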